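(* Let $f$, $c_f$ be as in the context and let $(\bar u_k)$ be generated by $\bar u_{k+1}=\bar u_k+\operatorname{argmin}_{\bar v}\{c_f(\bar u_k+\bar v;\bar u_k)+\frac{1}{2\gamma_k}\|\bar v\|_2^2\}$ from $\bar u_0$. Let $S=\{\bar u:f(\bar u)\le f(\bar u_0)\}$, let $\ell_{f,S}$ be the Lipschitz constant of $f$ on $S$, let $C=S+B_1$ where $B_1$ is the closed unit Euclidean ball centered at $0$, and let $M_C>0$ be such that $|f(\bar v)-c_f(\bar v;\bar u)|\le\frac{M_C}{2}\|\bar v-\bar u\|_2^2$ for all $\bar u,\bar v\in C$. Then for any $k$ with $\bar u_k\in S$, any step size $$\gamma_k\le\hat\gamma=\min\{\ell_{f,S}^{-1},M_C^{-1}\}$$ ensures the sufficient decrease condition $f(\bar u_{k+1})\le c_f(\bar u_{k+1};\bar u_k)+\frac{1}{2\gamma_k}\|\bar u_{k+1}-\bar u_k\|_2^2$.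
   Context: Let $h:\mathbb{R}^{\tau d}\to\mathbb{R}$ and $g:\mathbb{R}^{\tau p}\to\mathbb{R}$ be convex quadratic functions, $\tilde x:\mathbb{R}^{\tau p}\to\mathbb{R}^{\tau d}$ differentiable with continuous gradients, and $f(\bar u)=h(\tilde x(\bar u))+g(\bar u)$. For differentiable $F:\mathbb{R}^n\to\mathbb{R}^m$, $\nabla F(z)\in\mathbb{R}^{n\times m}$ is the transposed Jacobian. The convex model is $c_f(\bar u+\bar v;\bar u)=h(\tilde x(\bar u)+\nabla\tilde x(\bar u)^\top\bar v)+g(\bar u+\bar v)$. *)

(* Defs.v *)
(* Row vectors 'rV[R]_n model R^n. *)
From HB Require Import structures.
From mathcomp Require Import all_boot all_order all_algebra.
From mathcomp Require Import all_classical all_reals all_analysis.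
Set Implicit Arguments. Unset Strict Implicit. Unset Printing Implicit Defensive.
Import Order.TTheory GRing.Theory Num.Theory.
Import numFieldNormedType.Exports.
Local Open Scope ring_scope.

Section Defs.
Variable R : realType.

(* squared Euclidean norm and Euclidean norm (the library norm on 'rV is the max norm) *)
Definition sqnorm2 n (v : 'rV[R]_n) : R := \sum_(i < n) v 0 i ^+ 2.
Definition norm2 n (v : 'rV[R]_n) : R := Num.sqrt (sqnorm2 v).

Definition convex_quadratic n (q : 'rV[R]_n -> R) : Prop :=
  exists (Q : 'M[R]_n) (b : 'rV[R]_n) (c : R),
    Q^T = Q /\ (forall x : 'rV[R]_n, 0 <= (x *m Q *m x^T) 0 0) /\
    forall x, q x = 2^-1 * (x *m Q *m x^T) 0 0 + (x *m b^T) 0 0 + c.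

(* transposed Jacobian: grad F u  i j = d F_j / d u_i  (an n x m matrix) *)
Definition grad n m (F : 'rV[R]_n -> 'rV[R]_m) (u : 'rV[R]_n) : 'M[R]_(n, m) :=
  \matrix_(i < n, j < m) ('D_(delta_mx 0 i) F u) 0 j.

(* the convex model c_f(u + v; u) = h(x(u) + grad x(u)^T v) + g(u + v),
   written with w = u + v as first argument *)
Definition cmodel n m (h : 'rV[R]_m -> R) (g : 'rV[R]_n -> R)
  (xt : 'rV[R]_n -> 'rV[R]_m) (w u : 'rV[R]_n) : R :=
  h (xt u + (w - u) *m grad xt u) + g w.

Definition euclid_lipschitz_on n (f : 'rV[R]_n -> R) (S : set 'rV[R]_n) (l : R) : Prop :=
  forall x y, S x -> S y -> `|f x - f y| <= l * norm2 (x - y).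

Definition add_unit_ball n (S : set 'rV[R]_n) : set 'rV[R]_n :=
  fun x => exists s w, S s /\ norm2 w <= 1 /\ x = s + w.

Definition fobj n m (h : 'rV[R]_m -> R) (g : 'rV[R]_n -> R)
  (xt : 'rV[R]_n -> 'rV[R]_m) (u : 'rV[R]_n) : R := h (xt u) + g u.

Definition sublevel n (f : 'rV[R]_n -> R) (a : R) : set 'rV[R]_n :=
  fun u => f u <= a.

End Defs.

(* Main.v *)
Require Import Defs.
From HB Require Import structures.
From mathcomp Require Import all_boot all_order all_algebra.
From mathcomp Require Import all_classical all_reals all_analysis.
From mathcomp Require Import ring lra.
Import Order.TTheory GRing.Theory Num.Theory.
Import numFieldNormedType.Exports.
Local Open Scope ring_scope.

Lemma sqnorm2Z (R : realType) n (s : R) (v : 'rV[R]_n) :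
  sqnorm2 (s *: v) = s ^+ 2 * sqnorm2 v.
Proof. by rewrite /sqnorm2 mulr_sumr; apply: eq_bigr => i _; rewrite mxE exprMn. Qed.

Lemma sqnorm2_ge0 (R : realType) n (v : 'rV[R]_n) : 0 <= sqnorm2 v.
Proof. by apply: sumr_ge0 => i _; apply: sqr_ge0. Qed.

Lemma norm2Z (R : realType) n (s : R) (v : 'rV[R]_n) : 0 <= s ->
  norm2 (s *: v) = s * norm2 v.
Proof.
move=> s0; rewrite /norm2 sqnorm2Z sqrtrM ?sqr_ge0 // sqrtr_sqr ger0_norm //.
Qed.

Lemma norm2_sq (R : realType) n (v : 'rV[R]_n) : norm2 v ^+ 2 = sqnorm2 v.
Proof. by rewrite /norm2 sqr_sqrtr // sqnorm2_ge0. Qed.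

Lemma norm2_ge0 (R : realType) n (v : 'rV[R]_n) : 0 <= norm2 v.
Proof. exact: sqrtr_ge0. Qed.

Lemma quad_convex (R : realType) n (q : 'rV[R]_n -> R) (x e : 'rV[R]_n) (s : R) :
  convex_quadratic q -> 0 <= s <= 1 ->
  q (x + s *: e) <= (1 - s) * q x + s * q (x + e).
Proof.
move=> [Q [b [c [_ [Qpsd qE]]]]] /andP[s0 s1].
rewrite !qE.
have Hee := Qpsd e.
rewrite !(linearD, linearZ) /= ?mulmxDl ?mulmxDr ?mulmxDl.
do 4 rewrite -?scalemxAl -?scalemxAr.
move: Hee.
move: (x *m Q *m x^T) (x *m Q *m e^T) (e *m Q *m x^T) (e *m Q *m e^T) (x *m b^T) (e *m b^T) => a bb cc d p r Hd.
rewrite !mxE.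
have : 0 <= (s - s^+2) * d 0 0 by apply: mulr_ge0 => //; nra.
nra.
Qed.


Lemma cmodel_self (R : realType) n m (h : 'rV[R]_m -> R) g xt (u : 'rV[R]_n) :
  cmodel h g xt u u = fobj h g xt u.
Proof. by rewrite /cmodel /fobj subrr mul0mx addr0. Qed.

Lemma cmodel_convex (R : realType) n m (h : 'rV[R]_m -> R) g xt (u d : 'rV[R]_n) (s : R) :
  convex_quadratic h -> convex_quadratic g -> 0 <= s <= 1 ->
  cmodel h g xt (u + s *: d) u <=
    (1 - s) * cmodel h g xt u u + s * cmodel h g xt (u + d) u.
Proof.
move=> hq gq s01; rewrite /cmodel !(addrC u) !addrK addNr mul0mx addr0 -scalemxAl.
have H1 := @quad_convex _ _ h (xt u) (d *m grad xt u) s hq s01.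
have H2 := @quad_convex _ _ g u d s gq s01.
rewrite (addrC d u) (addrC (s *: d) u).
lra.
Qed.
Theorem lemma3 (R : realType) (n m : nat)
  (h : 'rV[R]_m -> R) (g : 'rV[R]_n -> R) (xt : 'rV[R]_n -> 'rV[R]_m)
  (hq : convex_quadratic h) (gq : convex_quadratic g)
  (xt_diff : forall u, differentiable xt u)
  (xt_grad_cont : forall i j, continuous (fun u => grad xt u i j))
  (u : nat -> 'rV[R]_n) (gamma : nat -> R)
  (gamma_pos : forall k, 0 < gamma k)
  (u_step : forall k (v : 'rV[R]_n),
     cmodel h g xt (u k.+1) (u k) + (2 * gamma k)^-1 * sqnorm2 (u k.+1 - u k)
     <= cmodel h g xt (u k + v) (u k) + (2 * gamma k)^-1 * sqnorm2 v)
  (l M : R) (l_pos : 0 < l) (M_pos : 0 < M)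
  (l_lip : euclid_lipschitz_on (fobj h g xt) (sublevel (fobj h g xt) (fobj h g xt (u 0%N))) l)
  (M_bound : forall w v : 'rV[R]_n,
     add_unit_ball (sublevel (fobj h g xt) (fobj h g xt (u 0%N))) w ->
     add_unit_ball (sublevel (fobj h g xt) (fobj h g xt (u 0%N))) v ->
     `|fobj h g xt v - cmodel h g xt v w| <= M / 2 * sqnorm2 (v - w))
  (k : nat)
  (uk_S : sublevel (fobj h g xt) (fobj h g xt (u 0%N)) (u k))
  (gamma_le : gamma k <= Num.min l^-1 M^-1) :
  fobj h g xt (u k.+1)
    <= cmodel h g xt (u k.+1) (u k) + (2 * gamma k)^-1 * sqnorm2 (u k.+1 - u k).
Proof.
set S := sublevel (fobj h g xt) (fobj h g xt (u 0%N)).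
set d := u k.+1 - u k.
have ud : u k.+1 = u k + d by rewrite /d addrC subrK.
set F := fobj h g xt (u k).
set phi1 := cmodel h g xt (u k.+1) (u k).
set ga := gamma k.
have ga0 : 0 < ga by exact: gamma_pos.
set ig := (2 * ga)^-1.
have igE : 2 * ga * ig = 1 by rewrite /ig mulfV // mulf_neq0 // gt_eqF.
have ig0 : 0 < ig by rewrite /ig invr_gt0 mulr_gt0.
set a := sqnorm2 d.
set r := norm2 d.
have ar : a = r ^+ 2 by rewrite /r norm2_sq.
have r0 : 0 <= r by apply: norm2_ge0.
move: gamma_le; rewrite le_min => /andP[gl gM].
have gl1 : ga * l <= 1.
  by have := ler_wpM2r (ltW l_pos) gl; rewrite mulVf ?gt_eqF.
have gM1 : ga * M <= 1.
  by have := ler_wpM2r (ltW M_pos) gM; rewrite mulVf ?gt_eqF.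
have ukC : add_unit_ball S (u k).
  exists (u k), 0; split => //; split; last by rewrite addr0.
  by have := @norm2Z _ _ 0 d (lexx 0); rewrite scale0r mul0r => ->.
have cself : cmodel h g xt (u k) (u k) = F by rewrite cmodel_self.
have r1 : r <= 1.
  rewrite leNgt; apply/negP => hr.
  set s := (r - 1) / (4 * r ^+ 2).
  have r0' : 0 < r by apply: lt_trans hr.
  have hs : s * (4 * r ^+ 2) = r - 1.
    by rewrite /s mulfVK // mulf_neq0 // ?expf_neq0 // gt_eqF.
  clearbody s.
  have s0 : 0 < s by nra.
  have sr1 : s * r <= 1 by nra.
  have s1 : s <= 1 by nra.
  have hA := u_step k ((1 - s) *: d).
  have t01 : 0 <= 1 - s <= 1 by apply/andP; split; lra.
  have hcA := @cmodel_convex _ _ _ h g xt (u k) d (1 - s) hq gq t01.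
  rewrite -ud cself -/phi1 in hcA.
  rewrite sqnorm2Z -/ig -/a -/d -/phi1 in hA.
  have vC : add_unit_ball S (u k + s *: d).
    exists (u k), (s *: d); split => //; split => //.
    by rewrite norm2Z; [exact: sr1 | exact: ltW].
  have hM := M_bound _ _ ukC vC.
  have esd : u k + s *: d - u k = s *: d by rewrite addrC addKr.
  rewrite esd sqnorm2Z -/a in hM.
  have s01 : 0 <= s <= 1 by apply/andP; split; lra.
  have hcB := @cmodel_convex _ _ _ h g xt (u k) d s hq gq s01.
  rewrite -ud cself -/phi1 in hcB.
  have hf : F - l * (s * r) <= fobj h g xt (u k + s *: d).
    case: (boolP (fobj h g xt (u k + s *: d) <= fobj h g xt (u 0%N))) => hin.
      have := l_lip _ _ hin uk_S.
      rewrite esd norm2Z -?/r; last exact: ltW.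
      rewrite ler_norml -/F => /andP [h1 _]. lra.
    rewrite -ltNge in hin.
    have : F <= fobj h g xt (u 0%N) by [].
    have : 0 <= l * (s * r) by apply: mulr_ge0; [apply: ltW | apply: mulr_ge0; [apply: ltW|]].
    lra.
  move: hM; rewrite ler_norml => /andP [_ hM].

  have eA : s * (phi1 - F) <= (s ^+ 2 - 2 * s) * ig * a by lra.
  have eB : - s * (phi1 - F) <= s * (l * r + M / 2 * s * a) by lra.
  have eA' : phi1 - F <= (s - 2) * ig * a.
    rewrite -(ler_pM2l s0); lra.
  have eB' : - (phi1 - F) <= l * r + M / 2 * s * a.
    rewrite -(ler_pM2l s0); lra.
  have e1 : (2 - s) * ig * a <= l * r + M / 2 * s * a by lra.
  have ga2 : 0 <= 2 * ga by apply: mulr_ge0 => //; apply: ltW.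
  have e1' := ler_wpM2l ga2 e1.
  have E : 2 * ga * ((2 - s) * ig * a) = (2 - s) * a * (2 * ga * ig) by ring.
  rewrite E igE mulr1 in e1'.
  have E' : 2 * ga * (l * r + M / 2 * s * a) = 2 * (ga * l * r) + (ga * M) * (s * a) by field.
  rewrite E' in e1'.
  have a0 : 0 <= a by rewrite ar; apply: sqr_ge0.
  have sa0 : 0 <= s * a by apply: mulr_ge0 => //; apply: ltW.
  have f1 := ler_wpM2r r0 gl1.
  have f2 := ler_wpM2r sa0 gM1.
  rewrite mul1r in f1; rewrite mul1r in f2.
  have e3 : (2 - s) * a <= 2 * r + s * a by lra.
  rewrite ar in e3.
  have rr : 0 < (r - 1) * (4 * r - 1) by apply: mulr_gt0; lra.
  lra.
have uC : add_unit_ball S (u k.+1).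
  by exists (u k), d; split => //; split.
have := M_bound _ _ ukC uC.
rewrite -/phi1 -/d -/a ler_norml => /andP [_ hM].
have a0 : 0 <= a by apply: sqnorm2_ge0.
have gi : ga * ig = 2^-1.
  apply: (@mulfI _ 2); first by rewrite pnatr_eq0.
  by rewrite mulrA igE mulfV // pnatr_eq0.
have : M / 2 * a <= ig * a.
  apply: ler_wpM2r => //.
  have E2 : ig * (1 - ga * M) = ig - M / 2 by rewrite mulrBr mulr1 mulrA (mulrC ig) gi mulrC.
  have : 0 <= ig * (1 - ga * M) by apply: mulr_ge0; lra.
  lra.
lra.
Qed.
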